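(* Let $\varphi$ be a setfunction on a set-algebra $(J,\mathcal{B})$ with $\varphi(\emptyset)=0$. Then the quotient set $Q(\varphi)=\bigcup_{k\in\mathbb{N}}Q_k(\varphi)$ is quotient-closed and has the common lift property.
   Context: A set-algebra $(J,\mathcal{B})$ is a family $\mathcal{B}$ of subsets of $J$ containing $\emptyset$ and closed under complement and finite union. A setfunction on $(J,\mathcal{B})$ is a map $\varphi\colon\mathcal{B}\to\mathbb{R}$; all setfunctions satisfy $\varphi(\emptyset)=0$. A setfunction is finite if it is defined on $(J,2^J)$ with $J$ finite. $\mathbb{N}$ denotes the positive integers and $[k]=\{1,\dots,k\}$. For $k\in\mathbb{N}$ and a measurable map $F\colon J\to[k]$ (i.e. $F^{-1}(i)\in\mathcal{B}$ for every $i$), the quotient $\varphi\circ F^{-1}$ is the setfunction on $(\,[k],2^{[k]})$ given by $A\mapsto\varphi(F^{-1}(A))$. $Q_k(\varphi)\subseteq\mathbb{R}^{2^k}$ is the set of all such quotients of $\varphi$ on $[k]$. A setfunction $\varphi$ is a lift of $\varphi'$ if $\varphi'$ is a quotient of $\varphi$. A family $A$ of finite setfunctions is quotient-closed if every quotient of a function in $A$ belongs to $A$; it has the common lift property if every finite subset of $A$ has a common lift belonging to $A$. *)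

(* Defs.v *)
From HB Require Import structures.
From mathcomp Require Import all_boot all_order all_algebra.
From mathcomp Require Import classical_sets reals.
Set Implicit Arguments. Unset Strict Implicit. Unset Printing Implicit Defensive.
Local Open Scope classical_set_scope.

Definition set_algebra (J : Type) (B : set (set J)) : Prop :=
  [/\ B set0, (forall A, B A -> B (~` A)) & (forall A C, B A -> B C -> B (A `|` C))].

(* A setfunction on (J,B) is represented as a total map phi : set J -> R,
   of which only the values on B are relevant (quotients only evaluate phi
   on sets of B). *)

Definition measurable_map (J : Type) (B : set (set J)) (k : nat) (F : J -> 'I_k) : Prop :=
  forall i : 'I_k, B (F @^-1` [set i]).

Definition quot (R : Type) (J : Type) (phi : set J -> R) (k : nat) (F : J -> 'I_k)
  : {set 'I_k} -> R :=
  fun A => phi (F @^-1` [set i | i \in A]).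

Definition Qk (R : Type) (J : Type) (B : set (set J)) (phi : set J -> R) (k : nat)
  : set ({set 'I_k} -> R) :=
  [set psi | exists F : J -> 'I_k, measurable_map B F /\ psi = quot phi F].

Arguments Qk {R J} B phi k.

(* A finite setfunction on [k] = {1,...,k} (k a positive integer), encoded on 'I_k. *)
Unset Implicit Arguments.
Record finsf (R : Type) := FinSF {
  fs_k : nat;
  fs_pos : (0 < fs_k)%N;
  fs_fun : {set 'I_fs_k} -> R }.

Arguments fs_k {R}.
Arguments fs_pos {R}.
Arguments fs_fun {R}.
Set Implicit Arguments.

(* Q(phi) = union over k in N of Q_k(phi). *)
Definition Q (R : Type) (J : Type) (B : set (set J)) (phi : set J -> R) : set (finsf R) :=
  [set s | Qk B phi (fs_k s) (fs_fun s)].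

(* t is a quotient of the finite setfunction s (every map of a finite set is
   measurable w.r.t. the power set); equivalently s is a lift of t. *)
Definition is_fquotient (R : Type) (t s : finsf R) : Prop :=
  exists F : 'I_(fs_k s) -> 'I_(fs_k t),
    fs_fun t = (fun A : {set 'I_(fs_k t)} => fs_fun s (F @^-1: A)).

Definition quotient_closed (R : Type) (A : set (finsf R)) : Prop :=
  forall s t, A s -> is_fquotient t s -> A t.

Definition common_lift_property (R : Type) (A : set (finsf R)) : Prop :=
  forall (n : nat) (f : 'I_n -> finsf R), (forall i, A (f i)) ->
    exists L, A L /\ (forall i, is_fquotient (f i) L).

(* Main.v *)
Require Import Defs.
From mathcomp Require Import all_boot all_order all_algebra.
From mathcomp Require Import classical_sets reals.
From mathcomp Require Import boolp.
Local Open Scope classical_set_scope.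
Local Open Scope ring_scope.

Section Aux.
Variables (J : Type) (B : set (set J)).
Hypothesis HB : set_algebra B.

Lemma B0 : B set0. Proof. by case: HB. Qed.
Lemma BC A : B A -> B (~` A). Proof. by case: HB => _ h _; apply: h. Qed.
Lemma BU A C : B A -> B C -> B (A `|` C). Proof. by case: HB => _ _ h; apply: h. Qed.
Lemma BI A C : B A -> B C -> B (A `&` C).
Proof.
move=> hA hC; rewrite -(setCK (A `&` C)) setCI.
by apply: BC; apply: BU; apply: BC.
Qed.
Lemma BT : B setT. Proof. rewrite -setC0; apply: BC; exact: B0. Qed.

Lemma Bunion (I : eqType) (A : I -> set J) (s : seq I) :
  (forall i, B (A i)) -> B [set x | exists2 i, i \in s & A i x].
Proof.
move=> hA; elim: s => [|a s IH].
  rewrite (_ : [set x | _] = set0); first exact: B0.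
  by apply/seteqP; split => x //= [].
rewrite (_ : [set x | _] = A a `|` [set x | exists2 i, i \in s & A i x]).
  exact: BU.
apply/seteqP; split => x /=.
  move=> [i]; rewrite inE => /orP [/eqP -> |his] Hi; first by left.
  by right; exists i.
case=> [Ha|[i his Hi]]; first by exists a; rewrite ?inE ?eqxx.
by exists i; rewrite // inE his orbT.
Qed.

Lemma Binter (I : eqType) (A : I -> set J) (s : seq I) :
  (forall i, B (A i)) -> B [set x | forall i, i \in s -> A i x].
Proof.
move=> hA; elim: s => [|a s IH].
  rewrite (_ : [set x | _] = setT); first exact: BT.
  by apply/seteqP; split => x //= _ i.
rewrite (_ : [set x | _] = A a `&` [set x | forall i, i \in s -> A i x]).
  exact: BI.
apply/seteqP; split => x /=.
  move=> h; split; first by apply: h; rewrite inE eqxx.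
  by move=> i his; apply: h; rewrite inE his orbT.
case=> Ha h i; rewrite inE => /orP [/eqP -> //|his]; exact: h.
Qed.

Lemma meas_comp k m (F : J -> 'I_k) (G : 'I_k -> 'I_m) :
  measurable_map B F -> measurable_map B (G \o F).
Proof.
move=> hF j.
rewrite (_ : _ @^-1` _ = [set x | exists2 i, i \in enum [pred i | G i == j]
                                    & (F @^-1` [set i]) x]).
  exact: Bunion.
apply/seteqP; split => x /=.
  by move=> <-; exists (F x); rewrite ?mem_enum ?inE ?eqxx.
by move=> [i]; rewrite mem_enum inE => /eqP <- ->.
Qed.
End Aux.

Theorem lemma2p4 (R : realType) (J : Type) (B : set (set J)) (phi : set J -> R) :
  set_algebra B -> phi set0 = 0 ->
  quotient_closed (Q B phi) /\ common_lift_property (Q B phi).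
Proof.
move=> HB _; split.
  move=> s t [F [hF es]] [G et]; rewrite /Q /=.
  exists (G \o F); split; first exact: meas_comp.
  rewrite et es; apply: funext => A; rewrite /quot; congr phi.
  by apply/seteqP; split => x /=; rewrite inE.
move=> n f hf.
have Fc : forall i, {F : J -> 'I_(fs_k (f i)) |
   measurable_map B F /\ fs_fun (f i) = quot phi F} := fun i => cid (hf i).
pose M := (\max_(i < n) fs_k (f i))%N.
have leM : forall i, (fs_k (f i) <= M)%N by move=> i; exact: (leq_bigmax i).
pose T := {ffun 'I_n -> 'I_M}.
pose H0 (x : J) : T := [ffun i => widen_ord (leM i) (sval (Fc i) x)].
have Tpos : (0 < #|T|)%N.
  apply/card_gt0P; exists [ffun i => widen_ord (leM i) (Ordinal (fs_pos (f i)))].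
  by [].
pose H (x : J) : 'I_#|T| := enum_rank (H0 x).
have hH : measurable_map B H.
  move=> j.
  rewrite (_ : _ @^-1` _ = [set x | forall i, i \in enum 'I_n ->
     ((widen_ord (leM i) \o sval (Fc i)) @^-1` [set (enum_val j) i]) x]).
    apply: Binter => // i; apply: meas_comp => //; exact: (proj1 (svalP (Fc i))).
  apply/seteqP; split => x /=.
    by move=> <- i _; rewrite /H enum_rankK ffunE.
  move=> h; rewrite /H; apply: (canLR enum_valK); apply/ffunP => i.
  by rewrite ffunE; apply: h; rewrite mem_enum.
exists (@FinSF R _ Tpos (quot phi H)); split.
  by exists H.
move=> i /=.
pose G (j : 'I_#|T|) : 'I_(fs_k (f i)) := insubd (Ordinal (fs_pos (f i))) (val (enum_val j i)).
exists G.
rewrite (proj2 (svalP (Fc i))); apply: funext => A; rewrite /quot; congr phi.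
apply/seteqP; split => x /=; rewrite inE /G /H enum_rankK ffunE /=;
  by rewrite (_ : insubd _ _ = sval (Fc i) x) //; apply: val_inj; rewrite val_insubd /= ltn_ord.
Qed.
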